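(* Consider a deterministic two-player mean-payoff game on $\vec{\mathcal G}=([n],E)$, $m=|E|$. Fix $r\in\mathbb R^m$, and let $\tilde r\in\mathbb R^m$ and $\varepsilon>0$ satisfy $\|r-\tilde r\|_\infty\le\varepsilon$. Let $(\sigma,\tau)\in\Xi$ and let $E^{\sigma,\tau}\subseteq E$ be the set of edges used by $(\sigma,\tau)$. Define $r^{(1)},r^{(2)}\in\mathbb R^m$ by $r^{(1)}_{ij}=r^{(2)}_{ij}=\tilde r_{ij}$ if $(i,j)\in E^{\sigma,\tau}$, and $r^{(1)}_{ij}=\tilde r_{ij}-2n\varepsilon$, $r^{(2)}_{ij}=\tilde r_{ij}+2n\varepsilon$ otherwise. If $(\sigma,\tau)$ is a pair of optimal policies in the mean-payoff games with weights $r^{(1)}$ and with weights $r^{(2)}$, then $(\sigma,\tau)$ is a pair of optimal policies in the mean-payoff game with weights $r$.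
   Context: The game is played on a directed graph without multiple edges, each vertex having an outgoing edge, with $[n]=V_{\max}\uplus V_{\min}$ and weights $r\in\mathbb R^E$. Policies $\sigma:V_{\max}\to[n]$, $\tau:V_{\min}\to[n]$ with $(i,\sigma(i)),(i,\tau(i))\in E$; $E^{\sigma,\tau}=\{(i,\sigma(i)):i\in V_{\max}\}\cup\{(i,\tau(i)):i\in V_{\min}\}$. $\Xi$ is the set of pairs for which the subgraph with edge set $E^{\sigma,\tau}$ has exactly one directed cycle. Playing $(\sigma,\tau)$ from $i$, the token enters a cycle; $g_i(\sigma,\tau)$ is its mean weight (sum of weights / number of edges). The value is the unique $\lambda\in\mathbb R^n$ admitting $(\sigma^*,\tau^* )$ with $g_i(\sigma',\tau^* )\le\lambda_i\le g_i(\sigma^*,\tau')$ for all $i,\sigma',\tau'$; such $(\sigma^*,\tau^* )$ is called a pair of optimal policies. *)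

(* Defs.v *)
From HB Require Import structures.
From mathcomp Require Import all_boot all_order all_algebra.
Set Implicit Arguments. Unset Strict Implicit. Unset Printing Implicit Defensive.
Import Order.TTheory GRing.Theory Num.Theory.
Local Open Scope ring_scope.

(* A game: vertices 'I_n, edge relation E : rel 'I_n (no multiple edges by
   construction), Vmax : {set 'I_n} (Vmin is its complement), weights
   r : 'I_n -> 'I_n -> R (only the values r i j with E i j matter). *)

Definition out_edges (n : nat) (E : rel 'I_n) : Prop := forall i, exists j, E i j.

(* A policy is a map 'I_n -> 'I_n; it is required to follow edges on the
   vertices of its player, its values elsewhere are irrelevant. *)
Definition max_policy (n : nat) (E : rel 'I_n) (Vmax : {set 'I_n})
  (sigma : 'I_n -> 'I_n) : Prop := forall i, i \in Vmax -> E i (sigma i).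
Definition min_policy (n : nat) (E : rel 'I_n) (Vmax : {set 'I_n})
  (tau : 'I_n -> 'I_n) : Prop := forall i, i \notin Vmax -> E i (tau i).

Definition succ (n : nat) (Vmax : {set 'I_n}) (sigma tau : 'I_n -> 'I_n)
  (i : 'I_n) : 'I_n := if i \in Vmax then sigma i else tau i.

Definition in_Esigtau (n : nat) (Vmax : {set 'I_n}) (sigma tau : 'I_n -> 'I_n)
  (i j : 'I_n) : bool := j == succ Vmax sigma tau i.

Definition on_cycle (n : nat) (s : 'I_n -> 'I_n) (x : 'I_n) : bool :=
  fconnect s (s x) x.

(* Xi: the functional graph E^{sigma,tau} has exactly one directed cycle,
   i.e. there is a cycle, and all cycle vertices lie on the same cycle. *)
Definition in_Xi (n : nat) (Vmax : {set 'I_n}) (sigma tau : 'I_n -> 'I_n) : Prop :=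
  let s := succ Vmax sigma tau in
  exists x, on_cycle s x /\ forall y, on_cycle s y -> fconnect s x y.

(* mean payoff from i: after n steps the token is on the cycle it enters;
   g_i is the mean weight of that cycle (length = orbit size). *)
Definition mean_payoff (R : realFieldType) (n : nat) (Vmax : {set 'I_n})
  (r : 'I_n -> 'I_n -> R) (sigma tau : 'I_n -> 'I_n) (i : 'I_n) : R :=
  let s := succ Vmax sigma tau in
  let x := iter n s i in
  let p := order s x in
  (\sum_(k < p) r (iter k s x) (iter k.+1 s x)) / p%:R.

Definition optimal_pair (R : realFieldType) (n : nat) (E : rel 'I_n)
  (Vmax : {set 'I_n}) (r : 'I_n -> 'I_n -> R) (sigma tau : 'I_n -> 'I_n) : Prop :=
  max_policy E Vmax sigma /\ min_policy E Vmax tau /\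
  exists lambda : 'I_n -> R,
    forall i (sigma' tau' : 'I_n -> 'I_n),
      max_policy E Vmax sigma' -> min_policy E Vmax tau' ->
      mean_payoff Vmax r sigma' tau i <= lambda i /\
      lambda i <= mean_payoff Vmax r sigma tau' i.

Definition perturb (R : realFieldType) (n : nat) (Vmax : {set 'I_n})
  (sigma tau : 'I_n -> 'I_n) (rt : 'I_n -> 'I_n -> R) (c : R) (i j : 'I_n) : R :=
  if in_Esigtau Vmax sigma tau i j then rt i j else rt i j + c.

(* Main.v *)
Require Import Defs.
From mathcomp Require Import all_boot all_order all_algebra.
From mathcomp Require Import ring lra.
Import Order.TTheory GRing.Theory Num.Theory.
Set Implicit Arguments. Unset Strict Implicit. Unset Printing Implicit Defensive.

Lemma on_cycleP n (s : 'I_n -> 'I_n) x : on_cycle s x -> iter (order s x) s x = x.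
Proof. by move=> h; apply/(orbitPcycle 4%N 2%N). Qed.

Lemma on_cycle_s n (s : 'I_n -> 'I_n) x : on_cycle s x -> on_cycle s (s x).
Proof.
move=> /(orbitPcycle 2%N 3%N) [k hk]; apply/(orbitPcycle 3%N 2%N).
by exists k; rewrite iterS -iterSr hk.
Qed.

Lemma on_cycle_iter n (s : 'I_n -> 'I_n) x j : on_cycle s x -> on_cycle s (iter j s x).
Proof. move=> h; elim: j => //= j IH; exact: on_cycle_s. Qed.

Lemma iter_n_cycle n (s : 'I_n -> 'I_n) i : on_cycle s (iter n s i).
Proof.
have := looping_order s i; rewrite /looping => /trajectP [j hj hij].
have hord : (order s i <= n)%N by rewrite -[X in (_ <= X)%N]card_ord max_card.
set d := order s i - j.
have hd : iter d s (iter j s i) = iter j s i.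
  by rewrite -iterD subnK; [exact: hij | exact: ltnW].
have hm : forall m, iter d s (iter m s (iter j s i)) = iter m s (iter j s i).
  by move=> m; rewrite -iterD addnC iterD hd.
have -> : iter n s i = iter (n - j) s (iter j s i).
  by rewrite -iterD subnK //; apply: ltnW; exact: (leq_trans hj).
apply/(orbitPcycle 3%N 2%N); exists d.-1; rewrite prednK ?hm //.
by rewrite /d subn_gt0.
Qed.

Lemma iter_mod (T : Type) (f : T -> T) y p k : iter p f y = y -> iter k f y = iter (k %% p) f y.
Proof.
move=> hp; rewrite {1}(divn_eq k p) addnC iterD; congr (iter _ f _).
by elim: (k %/ p) => // m IH; rewrite mulSn iterD IH hp.
Qed.

Lemma order_eq n (f g : 'I_n -> 'I_n) y p : (0 < p)%N -> iter p f y = y -> iter p g y = y ->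
  (forall k, (k <= p)%N -> iter k f y = iter k g y) -> order f y = order g y.
Proof.
move=> p0 hf hg he; apply: eq_card => z; rewrite !inE.
apply/idP/idP => /iter_findex <-.
- by rewrite (iter_mod _ hf) he ?fconnect_iter // ltnW // ltn_pmod.
- by rewrite (iter_mod _ hg) -he ?fconnect_iter // ltnW // ltn_pmod.
Qed.

Local Open Scope ring_scope.

Definition cm (R : realFieldType) n (w : 'I_n -> 'I_n -> R) (s : 'I_n -> 'I_n) (x : 'I_n) : R :=
  (\sum_(k < order s x) w (iter k s x) (iter k.+1 s x)) / (order s x)%:R.

Lemma mp_cm (R : realFieldType) n Vmax (w : 'I_n -> 'I_n -> R) sg tu i :
  mean_payoff Vmax w sg tu i = cm w (succ Vmax sg tu) (iter n (succ Vmax sg tu) i).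
Proof. by []. Qed.

Lemma cm_step (R : realFieldType) n (w : 'I_n -> 'I_n -> R) s x :
  on_cycle s x -> cm w s (s x) = cm w s x.
Proof.
move=> hc; rewrite /cm (iffLR (orbitPcycle 2%N 1%N) hc).
have := on_cycleP hc; have := order_gt0 s x.
case: (order s x) => // q _ hp; congr (_ / _).
under eq_bigr do rewrite -!iterSr.
rewrite big_ord_recr big_ord_recl /= addrC; congr (_ + _).
  by rewrite -iterS hp.
Qed.

Lemma cm_iter (R : realFieldType) n (w : 'I_n -> 'I_n -> R) s x j :
  on_cycle s x -> cm w s (iter j s x) = cm w s x.
Proof.
move=> h; elim: j => //= j IH; by rewrite cm_step ?IH // on_cycle_iter.
Qed.

Lemma cm_conn (R : realFieldType) n (w : 'I_n -> 'I_n -> R) s x y :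
  on_cycle s x -> fconnect s x y -> cm w s y = cm w s x.
Proof. by move=> h /iter_findex <-; rewrite cm_iter. Qed.


Definition pert (R : realFieldType) n (s : 'I_n -> 'I_n) (rt : 'I_n -> 'I_n -> R) (c : R) (a b : 'I_n) : R :=
  if b == s a then rt a b else rt a b + c.

Lemma sum_le_eps (R : realFieldType) p (a b : 'I_p -> R) (eps : R) :
  (forall k, `|b k - a k| <= eps) ->
  \sum_k b k - \sum_k a k <= p%:R * eps /\ \sum_k a k - \sum_k b k <= p%:R * eps.
Proof.
move=> hb; rewrite -!sumrB; split.
- apply: le_trans (_ : \sum_(k < p) eps <= _).
    by apply: ler_sum => k _; apply: le_trans (ler_norm _) (hb k).
  by rewrite sumr_const card_ord mulr_natl.
- apply: le_trans (_ : \sum_(k < p) eps <= _).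
    by apply: ler_sum => k _; apply: le_trans (ler_norm _) _; rewrite distrC; exact: hb.
  by rewrite sumr_const card_ord mulr_natl.
Qed.

Lemma sum_up (R : realFieldType) p (a b d : 'I_p -> R) (eps c : R) (k0 : 'I_p) :
  0 <= c -> p%:R * (2 * eps) <= c ->
  (forall k, `|b k - a k| <= eps) -> (forall k, d k = a k \/ d k = a k + c) -> d k0 = a k0 + c ->
  (\sum_k b k) / p%:R <= (\sum_k d k) / p%:R - eps.
Proof.
move=> c0 hc hb hd hk0.
have p0 : (0 < p)%N by case: p k0 {hc hb hd hk0 a b d} => [[]|].
have pR : 0 < p%:R :> R by rewrite ltr0n.
have [h1 _] := sum_le_eps hb.
have h2 : c <= \sum_k d k - \sum_k a k.
  rewrite -sumrB (bigD1 k0) //= hk0 (_ : a k0 + c - a k0 = c); last by ring.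
  rewrite lerDl.
  by apply: sumr_ge0 => k _; case: (hd k) => ->; rewrite ?subrr // (_ : a k + c - a k = c); last by ring.
have h3 : \sum_k b k <= \sum_k d k - p%:R * eps by nra.
have -> : (\sum_k d k) / p%:R - eps = (\sum_k d k - p%:R * eps) / p%:R.
  by field; rewrite pnatr_eq0 -lt0n.
by apply: ler_wpM2r => //; rewrite invr_ge0 ler0n.
Qed.

Lemma sum_down (R : realFieldType) p (a b d : 'I_p -> R) (eps c : R) (k0 : 'I_p) :
  0 <= c -> p%:R * (2 * eps) <= c ->
  (forall k, `|b k - a k| <= eps) -> (forall k, d k = a k \/ d k = a k - c) -> d k0 = a k0 - c ->
  (\sum_k d k) / p%:R + eps <= (\sum_k b k) / p%:R.
Proof.
move=> c0 hc hb hd hk0.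
have p0 : (0 < p)%N by case: p k0 {hc hb hd hk0 a b d} => [[]|].
have pR : 0 < p%:R :> R by rewrite ltr0n.
have [_ h1] := sum_le_eps hb.
have h2 : c <= \sum_k a k - \sum_k d k.
  rewrite -sumrB (bigD1 k0) //= hk0 (_ : a k0 - (a k0 - c) = c); last by ring.
  rewrite lerDl.
  by apply: sumr_ge0 => k _; case: (hd k) => ->; rewrite ?subrr // (_ : a k - (a k - c) = c); last by ring.
have h3 : \sum_k d k + p%:R * eps <= \sum_k b k by nra.
have -> : (\sum_k d k) / p%:R + eps = (\sum_k d k + p%:R * eps) / p%:R.
  by field; rewrite pnatr_eq0 -lt0n.
by apply: ler_wpM2r => //; rewrite invr_ge0 ler0n.
Qed.

Lemma caseAB n (s s' : 'I_n -> 'I_n) x0 y :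
  on_cycle s x0 -> (forall z, on_cycle s z -> fconnect s x0 z) -> on_cycle s' y ->
  (forall (R : realFieldType) (w : 'I_n -> 'I_n -> R), cm w s' y = cm w s x0) \/
  exists k0 : 'I_(order s' y), iter k0.+1 s' y != s (iter k0 s' y).
Proof.
move=> hx0 hall hy.
have [hB|hA] := boolP [exists k0 : 'I_(order s' y), iter k0.+1 s' y != s (iter k0 s' y)].
  by right; apply/existsP.
left; move: hA; rewrite negb_exists => /forallP hA.
have he : forall k, (k <= order s' y)%N -> iter k s' y = iter k s y.
  elim => // k IH hk; rewrite iterS.
  have := hA (Ordinal hk); rewrite negbK /= => /eqP ->.
  by rewrite IH ?(ltnW hk).
have hp := on_cycleP hy.
have hsp : iter (order s' y) s y = y by rewrite -he // hp.
have ho : order s' y = order s y := order_eq (order_gt0 s' y) hp hsp he.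
have hcy : on_cycle s y by apply/(orbitPcycle 4%N 2%N); rewrite -ho.
move=> R w; rewrite -(cm_conn w hx0 (hall _ hcy)) /cm -ho; congr (_ / _).
by apply: eq_bigr => k _; rewrite !he // ?(ltnW (ltn_ord k)) ?(ltn_ord k).
Qed.

Lemma div_close (R : realFieldType) (A B P eps : R) : 0 < P -> B - A <= P * eps -> A - B <= P * eps ->
  A / P - eps <= B / P /\ B / P <= A / P + eps.
Proof.
move=> pR h1 h2.
have -> : A / P - eps = (A - P * eps) / P by field; rewrite gt_eqF.
have -> : A / P + eps = (A + P * eps) / P by field; rewrite gt_eqF.
have pi : 0 <= P^-1 by rewrite invr_ge0 ltW.
split; apply: ler_wpM2r => //; lra.
Qed.

Lemma cm_close (R : realFieldType) n (E : rel 'I_n) (s : 'I_n -> 'I_n) x (r rt : 'I_n -> 'I_n -> R) eps :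
  (forall i j, E i j -> `|r i j - rt i j| <= eps) -> (forall z, E z (s z)) ->
  cm rt s x - eps <= cm r s x /\ cm r s x <= cm rt s x + eps.
Proof.
move=> hr hE.
have [h1 h2] := sum_le_eps (a := fun k : 'I_(order s x) => rt (iter k s x) (iter k.+1 s x))
  (b := fun k : 'I_(order s x) => r (iter k s x) (iter k.+1 s x)) (eps := eps) (fun k => hr _ _ (hE _)).
have pR : 0 < (order s x)%:R :> R by rewrite ltr0n order_gt0.
exact: (div_close pR h1 h2).
Qed.

Lemma dev_le (R : realFieldType) n (E : rel 'I_n) (s s' : 'I_n -> 'I_n) x0 (r rt : 'I_n -> 'I_n -> R) eps :
  (forall i j, E i j -> `|r i j - rt i j| <= eps) -> 0 < eps ->
  (forall z, E z (s z)) -> (forall z, E z (s' z)) ->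
  on_cycle s x0 -> (forall z, on_cycle s z -> fconnect s x0 z) -> forall y, on_cycle s' y ->
  cm (pert s rt (2 * n%:R * eps)) s' y <= cm (pert s rt (2 * n%:R * eps)) s x0 ->
  cm r s' y <= cm r s x0.
Proof.
move=> hr he0 hE hE' hx0 hall y hy hle.
have hG : cm (pert s rt (2 * n%:R * eps)) s x0 = cm rt s x0.
  rewrite /cm; congr (_ / _); apply: eq_bigr => k _; by rewrite /pert /= eqxx.
have [hc1 _] := cm_close x0 hr hE.
case: (caseAB hx0 hall hy) => [hA | [k0 hk0]]; first by rewrite hA.
have hpn : ((order s' y)%:R <= n%:R :> R).
  by rewrite ler_nat -[X in (_ <= X)%N]card_ord max_card.
have hup := sum_up (a := fun k : 'I_(order s' y) => rt (iter k s' y) (iter k.+1 s' y))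
  (b := fun k : 'I_(order s' y) => r (iter k s' y) (iter k.+1 s' y))
  (d := fun k : 'I_(order s' y) => pert s rt (2 * n%:R * eps) (iter k s' y) (iter k.+1 s' y))
  (eps := eps) (c := 2 * n%:R * eps) (k0 := k0).
have hup' : cm r s' y <= cm (pert s rt (2 * n%:R * eps)) s' y - eps.
  apply: hup.
  - by apply: mulr_ge0; [apply: mulr_ge0 | apply: ltW].
  - nra.
  - by move=> k; apply: hr; apply: hE'.
  - by move=> k; rewrite /pert; case: ifP => _; [left | right].
  - by rewrite /pert ifN.
rewrite hG in hle; lra.
Qed.

Lemma dev_ge (R : realFieldType) n (E : rel 'I_n) (s s' : 'I_n -> 'I_n) x0 (r rt : 'I_n -> 'I_n -> R) eps :
  (forall i j, E i j -> `|r i j - rt i j| <= eps) -> 0 < eps ->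
  (forall z, E z (s z)) -> (forall z, E z (s' z)) ->
  on_cycle s x0 -> (forall z, on_cycle s z -> fconnect s x0 z) -> forall y, on_cycle s' y ->
  cm (pert s rt (- (2 * n%:R * eps))) s x0 <= cm (pert s rt (- (2 * n%:R * eps))) s' y ->
  cm r s x0 <= cm r s' y.
Proof.
move=> hr he0 hE hE' hx0 hall y hy hle.
have hG : cm (pert s rt (- (2 * n%:R * eps))) s x0 = cm rt s x0.
  rewrite /cm; congr (_ / _); apply: eq_bigr => k _; by rewrite /pert /= eqxx.
have [_ hc2] := cm_close x0 hr hE.
case: (caseAB hx0 hall hy) => [hA | [k0 hk0]]; first by rewrite hA.
have hpn : ((order s' y)%:R <= n%:R :> R).
  by rewrite ler_nat -[X in (_ <= X)%N]card_ord max_card.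
have hup := sum_down (a := fun k : 'I_(order s' y) => rt (iter k s' y) (iter k.+1 s' y))
  (b := fun k : 'I_(order s' y) => r (iter k s' y) (iter k.+1 s' y))
  (d := fun k : 'I_(order s' y) => pert s rt (- (2 * n%:R * eps)) (iter k s' y) (iter k.+1 s' y))
  (eps := eps) (c := 2 * n%:R * eps) (k0 := k0).
have hup' : cm (pert s rt (- (2 * n%:R * eps))) s' y + eps <= cm r s' y.
  apply: hup.
  - by apply: mulr_ge0; [apply: mulr_ge0 | apply: ltW].
  - nra.
  - by move=> k; apply: hr; apply: hE'.
  - by move=> k; rewrite /pert; case: ifP => _; [left | right].
  - by rewrite /pert ifN.
rewrite hG in hle; lra.
Qed.

Theorem mainTheorem18 (R : realFieldType) (n : nat) (E : rel 'I_n)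
  (Vmax : {set 'I_n}) (r rt : 'I_n -> 'I_n -> R) (eps : R)
  (sigma tau : 'I_n -> 'I_n) :
  out_edges E ->
  0 < eps ->
  (forall i j, E i j -> `|r i j - rt i j| <= eps) ->
  max_policy E Vmax sigma -> min_policy E Vmax tau ->
  in_Xi Vmax sigma tau ->
  optimal_pair E Vmax (perturb Vmax sigma tau rt (- (2 * n%:R * eps))) sigma tau ->
  optimal_pair E Vmax (perturb Vmax sigma tau rt (2 * n%:R * eps)) sigma tau ->
  optimal_pair E Vmax r sigma tau.
Proof.
move=> hout he0 hr hsig htau [x0 [hx0 hall]] [_ [_ [l1 h1]]] [_ [_ [l2 h2]]].
have hEp : forall sg tu, max_policy E Vmax sg -> min_policy E Vmax tu ->
    forall z, E z (succ Vmax sg tu z).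
  by move=> sg tu hs ht z; rewrite /succ; case: ifP => hz; [apply: hs | apply: ht; rewrite hz].
have hG : forall (w : 'I_n -> 'I_n -> R) i,
    mean_payoff Vmax w sigma tau i = cm w (succ Vmax sigma tau) x0.
  by move=> w i; rewrite mp_cm (cm_conn w hx0 (hall _ (iter_n_cycle _ _))).
split => //; split => //.
exists (fun _ => cm r (succ Vmax sigma tau) x0) => i sg' tu' hs' ht'; split.
- rewrite mp_cm; apply: (dev_le hr he0 (hEp _ _ hsig htau) (hEp _ _ hs' htau) hx0 hall (iter_n_cycle _ _)).
  have H := le_trans (h2 i sg' tau hs' htau).1 (h2 i sigma tau hsig htau).2.
  rewrite hG mp_cm in H; exact: H.
- rewrite mp_cm; apply: (dev_ge hr he0 (hEp _ _ hsig htau) (hEp _ _ hsig ht') hx0 hall (iter_n_cycle _ _)).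
  have H := le_trans (h1 i sigma tau hsig htau).1 (h1 i sigma tu' hsig ht').2.
  rewrite hG mp_cm in H; exact: H.
Qed.
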